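(* Let $G$ be a $\gamma_t$-critical graph of order $n$ with $\gamma_t(G)=n-\Delta(G)$ and $\delta(G)\ge 2$. Let $v$ be a vertex with $d(v)=\Delta(G)$, let $S=V(G)\setminus N[v]$, and let $H_1,\dots,H_t$ be the connected components of $G[S]$. Then: (1) each $H_i$ is isomorphic to $P_2$ or $P_3$; (2) if some $H_i$ is isomorphic to $P_3$, then $G[S]$ itself is a path $P_3=u_1u_2u_3$ (so $t=1$); moreover $N(u_2)\cap N(v)=\emptyset$, and $N(v)$ is the disjoint union of the two nonempty sets $N(u_1)\setminus\{u_2\}$ and $N(u_3)\setminus\{u_2\}$; (3) if every $H_i$ is isomorphic to $P_2$, say $H_i=u_iw_i$, then $N(u)\cap N(v)\neq\emptyset$ for every $u\in S$, and $N(v)$ is the disjoint union of the sets $N(u_1)\setminus\{w_1\},\,N(w_1)\setminus\{u_1\},\dots,N(u_t)\setminus\{w_t\},\,N(w_t)\setminus\{u_t\}$.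
   Context: All graphs are finite and simple. $N(x)$ is the neighborhood of $x$, $N[x]=N(x)\cup\{x\}$, $d(x)=|N(x)|$, $G[X]$ the subgraph induced by $X$, $P_k$ the path on $k$ vertices. A set $S\subseteq V(G)$ is a total dominating set if every vertex of $G$ is adjacent to some vertex of $S$; $\gamma_t(G)$ is the minimum size of such a set. A leaf is a vertex of degree one. A graph $G$ with no isolated vertex is $\gamma_t$-critical if for every vertex $v$ not adjacent to a leaf, $\gamma_t(G-v)<\gamma_t(G)$. *)

(* Defs.v *)
(* A simple graph is a symmetric irreflexive relation e on a finType T. *)
From mathcomp Require Import all_boot.
Set Implicit Arguments. Unset Strict Implicit. Unset Printing Implicit Defensive.

Section Graph.
Variables (T : finType) (e : rel T).

Definition nbhd (x : T) : {set T} := [set y | e x y].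
Definition deg (x : T) : nat := #|nbhd x|.

Definition maxdeg : nat := \max_(x : T) deg x.

Definition leaf (x : T) : bool := deg x == 1.

Definition tds_on (A S : {set T}) : bool :=
  (S \subset A) && [forall x in A, [exists y in S, e x y]].

(* total domination number of G[A]: minimum size of a TDS of G[A]
   (the default #|A| is only reached when G[A] has no TDS, i.e. has an
   isolated vertex; this never happens where the notion is used). *)
Definition gammat_on (A : {set T}) : nat :=
  \big[minn/#|A|]_(S : {set T} | tds_on A S) #|S|.

Definition gammat : nat := gammat_on [set: T].

Definition no_isolated : Prop := forall x : T, exists y, e x y.

Definition gt_critical : Prop :=
  no_isolated /\
  forall v : T, (forall u, e v u -> ~~ leaf u) ->
    gammat_on [set~ v] < gammat.

Definition ind_rel (S : {set T}) : rel T :=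
  [rel x y | [&& e x y, x \in S & y \in S]].
Definition gcomp (S : {set T}) (u : T) : {set T} :=
  [set y in S | connect (ind_rel S) u y].

Definition isP2 (C : {set T}) : Prop :=
  exists a b, [/\ a != b, C = [set a; b] & e a b].

Definition isP3_on (C : {set T}) (u1 u2 u3 : T) : Prop :=
  [/\ [&& u1 != u2, u2 != u3 & u1 != u3], C = [set u1; u2; u3],
      e u1 u2, e u2 u3 & ~~ e u1 u3].
Definition isP3 (C : {set T}) : Prop :=
  exists u1 u2 u3, isP3_on C u1 u2 u3.

End Graph.

(* Main.v *)
Require Import Defs.
From mathcomp Require Import all_boot.
From Stdlib Require Import Lia.
Section Helpers.
Local Set Implicit Arguments. Local Unset Strict Implicit.

Lemma bigmin_le (I : finType) (P : pred I) (F : I -> nat) x i :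
  P i -> \big[minn/x]_(j | P j) F j <= F i.
Proof.
move=> Pi.
have H : forall r, i \in r -> \big[minn/x]_(j <- r | P j) F j <= F i.
  elim=> //= a r IH; rewrite in_cons big_cons; case/orP => [/eqP <-|Hi].
    by rewrite Pi geq_minl.
  by case: ifP => _; rewrite ?geq_min IH ?orbT.
exact: H (mem_index_enum _).
Qed.

Lemma bigmin_cases (I : finType) (P : pred I) (F : I -> nat) x :
  (\big[minn/x]_(j | P j) F j = x) \/ exists2 i, P i & \big[minn/x]_(j | P j) F j = F i.
Proof.
apply: (big_rec (fun y => y = x \/ exists2 i, P i & y = F i)); first by left.
move=> i y Pi [->|[k Pk ->]]; rewrite /minn; case: ltnP => _.
- by right; exists i.
- by left.
- by right; exists i.
- by right; exists k.
Qed.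

Lemma card3 (T : finType) (a b c : T) : a != b -> b != c -> a != c -> #|[set a; b; c]| = 3.
Proof.
move=> ab bc ac.
have -> : [set a; b; c] = a |: [set b; c] by apply/setP=> x; rewrite !inE orbA.
by rewrite cardsU1 cards2 !inE negb_or ab ac bc.
Qed.

Lemma card_le2 (T : finType) (a b : T) : #|[set a; b]| <= 2.
Proof. by rewrite cards2; case: (a != b). Qed.

End Helpers.

Theorem mainTheorem4 (T : finType) (e : rel T)
  (esym : symmetric e) (eirr : irreflexive e)
  (Hcrit : gt_critical e)
  (Hgt : gammat e = #|T| - maxdeg e)
  (Hmindeg : forall x : T, 2 <= deg e x)
  (v : T) (Hv : deg e v = maxdeg e) :
  let S := ~: (v |: nbhd e v) in
  (* (1) every component of G[S] is P_2 or P_3 *)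
  (forall u, u \in S -> isP2 e (gcomp e S u) \/ isP3 e (gcomp e S u)) /\
  (* (2) *)
  ((exists u, u \in S /\ isP3 e (gcomp e S u)) ->
     exists u1 u2 u3,
       [/\ isP3_on e S u1 u2 u3,
           nbhd e u2 :&: nbhd e v = set0,
           nbhd e v = (nbhd e u1 :\ u2) :|: (nbhd e u3 :\ u2),
           [disjoint (nbhd e u1 :\ u2) & (nbhd e u3 :\ u2)] &
           (nbhd e u1 :\ u2 != set0) && (nbhd e u3 :\ u2 != set0)]) /\
  (* (3) *)
  ((forall u, u \in S -> isP2 e (gcomp e S u)) ->
     (forall u, u \in S -> nbhd e u :&: nbhd e v != set0) /\
     (forall x, x \in nbhd e v <->
        exists u w, [/\ u \in S, w \in S, e u w & x \in nbhd e u :\ w]) /\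
     (forall u w u' w' x,
        u \in S -> w \in S -> e u w -> u' \in S -> w' \in S -> e u' w' ->
        x \in nbhd e u :\ w -> x \in nbhd e u' :\ w' -> u = u')).
Proof.
move=> S.
have inN x y : (y \in nbhd e x) = e x y by rewrite /nbhd inE.
have inS y : (y \in S) = (y != v) && ~~ e v y by rewrite /S !inE ?inN negb_or.
have neq_of_e x y : e x y -> x != y.
  by move=> exy; apply/eqP => H; move: exy; rewrite H eirr.
have cardS : #|S| + deg e v + 1 = #|T|.
  have := cardsC (v |: nbhd e v); rewrite cardsU1 ?inN eirr /= => H.
  rewrite -H /deg /S; rewrite -!plusE; lia.
have gtE : gammat e = #|S| + 1.
  by rewrite Hgt -Hv -cardS -addnA [deg e v + 1]addnC addnA addnK.
have gt_le D : tds_on e setT D -> #|S| + 1 <= #|D|.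
  by move=> HD; rewrite -gtE; apply: bigmin_le.
have c1 a (A : {set T}) : #|a |: A| <= #|A| + 1.
  by rewrite cardsU1 addnC leq_add2l leq_b1.
have LC w (X : {set T}) : e v w -> (forall s, s \in S -> e s w \/ exists2 y, y \in X & e s y) ->
    #|S| <= #|X| + 1.
  move=> evw HX.
  have := gt_le (v |: (w |: X)).
  have -> : tds_on e setT (v |: (w |: X)).
    rewrite /tds_on subsetT /=; apply/forall_inP => x _; apply/exists_inP.
    case: (eqVneq x v) => [->|xv]; first by exists w; rewrite ?evw // !inE eqxx orbT.
    case: (boolP (e v x)) => vx; first by exists v; rewrite ?inE ?eqxx // esym.
    have : x \in S by rewrite inS xv vx.
    move/HX => [xw|[y yX xy]]; first by exists w; rewrite // !inE eqxx orbT.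
    by exists y; rewrite // !inE yX !orbT.
  move=> /(_ isT) H.
  have H2 := leq_trans H (c1 _ _); rewrite leq_add2r in H2.
  by have := leq_trans H2 (c1 _ _).
have nl u : ~~ leaf e u.
  by rewrite /leaf; apply/negP => /eqP H; have := Hmindeg u; rewrite H.
have FA x : x != v -> exists2 y, y \in S & e x y.
  have := Hcrit.2 v (fun u _ => nl u).
  rewrite gtE /gammat_on; case: (bigmin_cases (fun D => tds_on e [set~ v] D) (fun D => #|D|) #|[set~ v]|).
    move=> ->; rewrite cardsC1 -cardS => Hlt.
    have := Hmindeg v; move: Hlt => /leP Hlt /leP H3.
    by exfalso; rewrite -!plusE in Hlt H3; lia.
  move=> [D /andP [Dsub /forall_inP HD] ->] HDlt xv.
  have noN y : y \in D -> ~~ e v y.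
    move=> yD; apply/negP => vy.
    have : tds_on e setT D.
      rewrite /tds_on subsetT /=; apply/forall_inP => z _.
      case: (eqVneq z v) => [->|zv]; first by apply/exists_inP; exists y.
      by apply: HD; rewrite !inE.
    by move/gt_le; rewrite leqNgt HDlt.
  have /exists_inP [y yD xy] : [exists y in D, e x y] by apply: HD; rewrite !inE.
  exists y => //; rewrite inS noN // andbT.
  by have := subsetP Dsub y yD; rewrite !inE.
have Sv s : s \in S -> s != v by rewrite inS => /andP [].
have Snv s : s \in S -> ~~ e v s by rewrite inS => /andP [].
pose f s := odflt s [pick y in S | e s y].
have fP s : s \in S -> f s \in S /\ e s (f s).
  move=> sS; rewrite /f; case: pickP => [y /andP [yS sy] //|H].
  by have [y yS sy] := FA s (Sv s sS); move: (H y); rewrite yS sy.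
have deg2 u y : exists2 x, e u x & x != y.
  case: (boolP [exists x, e u x && (x != y)]) => [/existsP [x /andP [ux xy]]|H].
    by exists x.
  have : nbhd e u \subset [set y].
    apply/subsetP => x; rewrite inN inE => ux; apply/negPn/negP => xy.
    by move: H; rewrite negb_exists => /forallP /(_ x); rewrite ux xy.
  by move/subset_leq_card; rewrite cards1 leqNgt -/(deg e u) Hmindeg.
have nbv x u : u \in S -> e u x -> x \notin S -> e v x.
  move=> uS ux xnS; have xv : x != v.
    by apply/eqP => xv; move: ux; rewrite xv esym => vu; move: (Snv u uS); rewrite vu.
  by move: xnS; rewrite inS xv /= negbK.
have imcard (Z : {set T}) : Z \subset S -> #|f @: (S :\: Z)| + #|Z| <= #|S|.
  move=> ZS; have := cardsID Z S; rewrite (setIidPr ZS) => <-.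
  by rewrite addnC leq_add2l leq_imset_card.
have F2 w p q : e v w -> p \in S -> q \in S -> e w p -> e w q -> p = q.
  move=> vw pS qS wp wq; apply/eqP/negPn/negP => pq.
  have := LC w (f @: (S :\: [set p; q])) vw.
  have := imcard [set p; q]; rewrite cards2 pq subUset !sub1set pS qS => /(_ isT) H1 H2.
  have : forall s, s \in S -> e s w \/ exists2 y, y \in f @: (S :\: [set p; q]) & e s y.
    move=> s sS; case: (boolP (s \in [set p; q])).
      by rewrite !inE => /orP [/eqP ->|/eqP ->]; left; rewrite esym.
    move=> sn; right; exists (f s); last exact: (fP s sS).2.
    by apply: imset_f; rewrite inE sn.
  move/H2 => H3; move: H1 H3 => /leP H1 /leP H3; rewrite -!plusE /= in H1 H3; lia.
have F3 t1 t2 c p w : t1 \in S -> t2 \in S -> c \in S -> t1 != t2 -> e t1 c -> e t2 c ->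
    p \in S -> e v w -> e w p -> (p == t1) || (p == t2).
  move=> t1S t2S cS t12 t1c t2c pS vw wp; apply/negPn/negP; rewrite negb_or => /andP [pt1 pt2].
  have := LC w (c |: f @: (S :\: [set p; t1; t2])) vw.
  have := imcard [set p; t1; t2]; rewrite card3 // !subUset !sub1set pS t1S t2S => /(_ isT) H1 H2.
  have : forall s, s \in S -> e s w \/ exists2 y, y \in c |: f @: (S :\: [set p; t1; t2]) & e s y.
    move=> s sS; case: (boolP (s \in [set p; t1; t2])).
      rewrite !inE -orbA => /or3P [/eqP ->|/eqP ->|/eqP ->].
      - by left; rewrite esym.
      - by right; exists c; rewrite // !inE eqxx.
      - by right; exists c; rewrite // !inE eqxx.
    move=> sn; right; exists (f s); last exact: (fP s sS).2.
    by rewrite inE; apply/orP; right; apply: imset_f; rewrite inE sn.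
  move/H2 => H3; have H4 := c1 c (f @: (S :\: [set p; t1; t2])).
  move: H1 H3 H4 => /leP H1 /leP H3 /leP H4; rewrite -!plusE /= in H1 H3 H4; lia.
have F4 s a : s \in S -> (forall y, y \in S -> e s y -> y = a) -> exists2 w, e v w & e s w.
  move=> sS Ha; have [z sx xa] := deg2 s a.
  exists z => //; apply: (nbv z s sS sx); apply/negP => xS.
  by move: xa; rewrite (Ha z xS sx) eqxx.
have gself u : u \in S -> u \in gcomp e S u by move=> uS; rewrite /gcomp inE uS connect0.
have gnb u y : u \in S -> y \in S -> e u y -> y \in gcomp e S u.
  by move=> uS yS uy; rewrite /gcomp inE yS; apply: connect1; rewrite /ind_rel /= uy uS yS.
have gsubS u : gcomp e S u \subset S by apply/subsetP => y; rewrite /gcomp inE => /andP [].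
have gsub (A : {set T}) u : (forall x y, x \in A -> y \in S -> e x y -> y \in A) ->
    u \in A -> gcomp e S u \subset A.
  move=> HA uA; apply/subsetP => y; rewrite /gcomp inE => /andP [_ /connectP [p pth ->]].
  elim: p u uA pth => //= x p IH u uA /andP [/and3P [ux uS xS] pth].
  exact: IH (HA u x uA xS ux) pth.
have gtrans u y z : y \in gcomp e S u -> z \in gcomp e S y -> z \in gcomp e S u.
  rewrite /gcomp !inE => /andP [_ uy] /andP [zS yz].
  by rewrite zS (connect_trans uy yz).
have P3 : (forall u, u \in S -> isP2 e (gcomp e S u)) ->
     (forall u, u \in S -> nbhd e u :&: nbhd e v != set0) /\
     (forall x, x \in nbhd e v <->
        exists u w, [/\ u \in S, w \in S, e u w & x \in nbhd e u :\ w]) /\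
     (forall u w u' w' x,
        u \in S -> w \in S -> e u w -> u' \in S -> w' \in S -> e u' w' ->
        x \in nbhd e u :\ w -> x \in nbhd e u' :\ w' -> u = u').
  move=> H2.
  have key u w x : u \in S -> w \in S -> e u w -> x \in S -> e u x -> x = w.
    move=> uS wS uw xS ux; apply/eqP/negPn/negP => xw.
    have [c [d [cd Hc _]]] := H2 u uS.
    have : [set u; w; x] \subset gcomp e S u.
      by rewrite !subUset !sub1set gself // !gnb.
    move/subset_leq_card; rewrite Hc card3 ?(neq_of_e _ _ uw) ?(neq_of_e _ _ ux) 1?eq_sym //.
    by rewrite ltnNge card_le2.
  have nS u w x : u \in S -> w \in S -> e u w -> e u x -> x != w -> e v x.
    move=> uS wS uw ux xw; apply: (nbv x u uS ux); apply/negP => xS.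
    by move: xw; rewrite (key u w x uS wS uw xS ux) eqxx.
  split; [|split].
  - move=> u uS; have [w wS uw] := FA u (Sv u uS).
    have [x ux xw] := deg2 u w.
    by apply/set0Pn; exists x; rewrite inE !inN ux (nS u w x).
  - move=> x; split.
      rewrite inN => vx.
      have xv : x != v by rewrite eq_sym neq_of_e.
      have [u uS xu] := FA x xv.
      have [w wS uw] := FA u (Sv u uS).
      exists u, w; split => //; rewrite !inE ?inN esym xu andbT.
      by apply/eqP => xw; move: (Snv w wS); rewrite -xw vx.
    move=> [u [w [uS wS uw]]]; rewrite !inE ?inN => /andP [xw ux].
    exact: (nS u w x).
  - move=> u w u' w' x uS wS uw u'S w'S uw'; rewrite !inE ?inN => /andP [xw ux] /andP [xw' ux'].
    have vx := nS u w x uS wS uw ux xw.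
    by apply: (F2 x); rewrite // esym.
have [w0 vw0] : exists w, e v w.
  have : 0 < #|nbhd e v| by apply: leq_trans (Hmindeg v).
  by rewrite card_gt0 => /set0Pn [w]; rewrite inN; exists w.
have w0v : w0 != v by rewrite eq_sym (neq_of_e _ _ vw0).
have [p0 p0S w0p0] := FA w0 w0v.
case: (boolP [exists s, [exists a, [exists b,
   [&& s \in S, a \in S, b \in S, a != b, e s a & e s b]]]]).
- move=> /existsP [s /existsP [a /existsP [b /and5P [sS aS bS ab /andP [sa sb]]]]].
  have as_ : a != s by rewrite eq_sym neq_of_e.
  have bs : b != s by rewrite eq_sym neq_of_e.
  have pab := F3 a b s p0 w0 aS bS sS ab (ltac:(by rewrite esym)) (ltac:(by rewrite esym)) p0S vw0 w0p0.
  have nab : ~~ e a b.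
    apply/negP => eab.
    have H1 := F3 s b a p0 w0 sS bS aS (ltac:(by rewrite eq_sym)) sa (ltac:(by rewrite esym)) p0S vw0 w0p0.
    have H2 := F3 s a b p0 w0 sS aS bS (ltac:(by rewrite eq_sym)) sb eab p0S vw0 w0p0.
    move: pab H1 H2; case/orP => /eqP ->.
    + by rewrite eqxx (negbTE as_) (negbTE ab).
    + by rewrite (negbTE bs) eqxx eq_sym (negbTE ab).
  have Ssub z : z \in S -> z \in [set a; s; b].
    move=> zS; apply/negPn/negP; rewrite !inE !negb_or => /andP [/andP [za zs] zb].
    have [z1 z1S zz1] := FA z (Sv z zS).
    case: (boolP [exists y in S, (y != z1) && e z y]).
    + move=> /exists_inP [z2 z2S /andP [z21 zz2]].
      have H := F3 z1 z2 z p0 w0 z1S z2S zS (ltac:(by rewrite eq_sym)) (ltac:(by rewrite esym)) (ltac:(by rewrite esym)) p0S vw0 w0p0.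
      have zp : e z p0 by case/orP: H => /eqP ->.
      have sp : e s p0 by case/orP: pab => /eqP ->.
      have := F3 z s p0 p0 w0 zS sS p0S zs zp sp p0S vw0 w0p0.
      by case/orP: pab => /eqP ->; rewrite ?(negbTE as_) ?(negbTE bs) eq_sym ?(negbTE za) ?(negbTE zb).
    + move=> H; have Hz : forall y, y \in S -> e z y -> y = z1.
        move=> y yS zy; apply/eqP/negPn/negP => yz1.
        by move: H; rewrite negb_exists_in => /forall_inP /(_ y yS); rewrite yz1 zy.
      have [w vw zw] := F4 z z1 zS Hz.
      have := F3 a b s z w aS bS sS ab (ltac:(by rewrite esym)) (ltac:(by rewrite esym)) zS vw (ltac:(by rewrite esym)).
      by rewrite (negbTE za) (negbTE zb).
  have SE : S = [set a; s; b].
    apply/setP => y; apply/idP/idP; first exact: Ssub.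
    by move=> Hy; rewrite !inE in Hy; move: Hy => /orP [/orP [|]|] /eqP ->.
  have gS u : u \in S -> gcomp e S u = S.
    move=> uS; apply/eqP; rewrite eqEsubset gsubS /=.
    have us : s \in gcomp e S u.
      have Hy := uS; rewrite {1}SE !inE in Hy; move: Hy => /orP [/orP [|]|] /eqP ->.
      + by apply: gnb => //; rewrite esym.
      + exact: gself.
      + by apply: gnb => //; rewrite esym.
    apply/subsetP => y Hy; rewrite {1}SE !inE in Hy; move: Hy => /orP [/orP [|]|] /eqP ->.
    + by apply: (gtrans u s) => //; apply: gnb.
    + done.
    + by apply: (gtrans u s) => //; apply: gnb.
  have HP3 : isP3_on e S a s b.
    by split => //; rewrite ?as_ ?(eq_sym s b) ?bs ?ab // esym.
  have sN x : e s x -> ~~ e v x.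
    apply: contraTN => vx; apply/negP => sx.
    have := F3 a b s s x aS bS sS ab (ltac:(by rewrite esym)) (ltac:(by rewrite esym)) sS vx (ltac:(by rewrite esym)).
    by rewrite eq_sym (negbTE as_) eq_sym (negbTE bs).
  have aN x : e a x -> x != s -> e v x.
    move=> ax xs; apply: (nbv x a aS ax); rewrite SE !inE (negbTE xs) eq_sym (negbTE (neq_of_e _ _ ax)).
    by apply/negP => /eqP xb; move: nab; rewrite -xb ax.
  have bN x : e b x -> x != s -> e v x.
    move=> bx xs; apply: (nbv x b bS bx); rewrite SE !inE (negbTE xs) (eq_sym x b) (negbTE (neq_of_e _ _ bx)) orbF.
    by rewrite orbF; apply/negP => /eqP xa; move: nab; rewrite -xa esym bx.
  split; [|split].
  + by move=> u uS; right; exists a, s, b; rewrite gS.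
  + move=> _; exists a, s, b; split => //.
    * apply/setP => x; rewrite !inE ?inN; apply/negP => /andP [sx vx].
      by move: (sN x sx); rewrite vx.
    * apply/setP => x; rewrite !inE ?inN; apply/idP/idP.
      - move=> vx; have xv : x != v by rewrite eq_sym neq_of_e.
        have [y yS xy] := FA x xv.
        have xs : x != s by apply/eqP => xs; move: (Snv s sS); rewrite -xs vx.
        move: (yS); rewrite SE !inE => /orP [/orP [|]|] /eqP yE; move: xy; rewrite yE => xy.
        + by rewrite xs (esym a x) xy.
        + by move: (sN x); rewrite (esym s x) xy vx => /(_ isT).
        + by rewrite xs (esym b x) xy orbT.
      - by case/orP => /andP [xs ?]; [apply: aN | apply: bN].
    * rewrite -setI_eq0; apply/eqP/setP => x; rewrite !inE ?inN; apply/negP.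
      move=> /andP [/andP [xs ax] /andP [_ bx]].
      have := F2 x a b (aN x ax xs) aS bS (ltac:(by rewrite esym)) (ltac:(by rewrite esym)).
      by move/eqP; rewrite (negbTE ab).
    * have [x ax xs] := deg2 a s; have [y bY ys] := deg2 b s.
      by apply/andP; split; apply/set0Pn; [exists x | exists y]; rewrite !inE ?inN ?xs ?ys.
  + move=> H2; exfalso; have [c [d [_ Hc _]]] := H2 s sS.
    move: Hc; rewrite gS // SE => Hc.
    have := card_le2 c d; rewrite -Hc card3 //; last by rewrite eq_sym.
- rewrite negb_exists => /forallP Hno.
  have uq s y1 y2 : s \in S -> y1 \in S -> y2 \in S -> e s y1 -> e s y2 -> y1 = y2.
    move=> sS y1S y2S sy1 sy2; apply/eqP/negPn/negP => y12.
    move: (Hno s); rewrite negb_exists => /forallP /(_ y1).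
    rewrite negb_exists => /forallP /(_ y2).
    by rewrite sS y1S y2S y12 sy1 sy2.
  have gE u : u \in S -> gcomp e S u = [set u; f u].
    move=> uS; have [fuS ufu] := fP u uS.
    apply/eqP; rewrite eqEsubset; apply/andP; split.
      apply: gsub; last by rewrite !inE eqxx.
      move=> x y Hx yS xy; rewrite !inE in Hx *; case/orP: Hx => /eqP xE.
        by rewrite xE in xy; rewrite (uq u y (f u)) ?eqxx ?orbT.
      rewrite xE in xy; have := uq (f u) y u fuS yS uS xy.
      by rewrite esym ufu => /(_ isT) ->; rewrite eqxx.
    apply/subsetP => y Hy; rewrite !inE in Hy; case/orP: Hy => /eqP ->; [exact: gself | exact: gnb].
  split; [|split].
  + move=> u uS; left; exists u, (f u); split; rewrite ?gE //; last exact: (fP u uS).2.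
    exact: neq_of_e (fP u uS).2.
  + move=> [u [uS [u1 [u2 [u3 [/and3P [h12 h23 h13] Hc _ _ _]]]]]].
    move: Hc; rewrite gE // => Hc.
    by have := card_le2 u (f u); rewrite Hc card3.
  + exact: P3.
Qed.
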